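(* Let $A \in \mathbb{R}^{p \times n}$, $G \in \mathbb{R}^{p \times m}$, $c_x \in \mathbb{R}^n$, $c_y \in \mathbb{R}^m$, and for a right-hand side vector $b \in \mathbb{R}^p$ consider the mixed-binary linear program \[ g(b) := \min_{x, y} \; c_x^T x + c_y^T y \quad \text{s.t.} \quad Ax + Gy \geq b,\; x \in \{0,1\}^n,\; y \in \mathbb{R}^m . \] Fix $b \in \mathbb{R}^p$. Suppose $(x^*, y^* )$ is an optimal solution of this problem (with right-hand side $b$) which is unique in the integer component, i.e. every optimal solution of the problem with right-hand side $b$ has integer part $x^*$. Suppose moreover that there is a neighborhood of $b$ such that for every $\hat b$ in this neighborhood the problem with right-hand side $\hat b$ has a feasible solution whose integer component is $x^*$. Then there exists a neighborhood of $b$ such that for all $\hat b$ in this neighborhood, $x^*$ is the integer part of the optimal solution to the corresponding problem with right-hand side $\hat b$. *)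

(* Defs.v *)
From HB Require Import structures.
From mathcomp Require Import all_boot all_order all_algebra.
From mathcomp Require Import reals.
Set Implicit Arguments. Unset Strict Implicit. Unset Printing Implicit Defensive.
Import Order.TTheory GRing.Theory Num.Theory.
Local Open Scope ring_scope.

Section MBLP.
Variables (R : realType) (p n m : nat).
Variables (A : 'M[R]_(p, n)) (G : 'M[R]_(p, m)) (cx : 'cV[R]_n) (cy : 'cV[R]_m).

Definition binary_vec (x : 'cV[R]_n) : Prop :=
  forall i : 'I_n, x i 0 = 0 \/ x i 0 = 1.

Definition mblp_feasible (b : 'cV[R]_p) (x : 'cV[R]_n) (y : 'cV[R]_m) : Prop :=
  binary_vec x /\ forall i : 'I_p, b i 0 <= (A *m x + G *m y) i 0.

Definition mblp_obj (x : 'cV[R]_n) (y : 'cV[R]_m) : R :=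
  (cx^T *m x + cy^T *m y) 0 0.

Definition mblp_optimal (b : 'cV[R]_p) (x : 'cV[R]_n) (y : 'cV[R]_m) : Prop :=
  mblp_feasible b x y /\
  forall x' y', mblp_feasible b x' y' -> mblp_obj x y <= mblp_obj x' y'.

Definition in_ball (b : 'cV[R]_p) (eps : R) (bhat : 'cV[R]_p) : Prop :=
  forall i : 'I_p, `|bhat i 0 - b i 0| < eps.

End MBLP.

(* Main.v *)
From HB Require Import structures.
Require Import Defs.
From mathcomp Require Import all_boot all_order all_algebra.
From mathcomp Require Import reals ring lra.
Import Order.TTheory GRing.Theory Num.Theory.
Local Open Scope ring_scope.

Lemma sep_exists (R : realFieldType) (L U : seq R) :
  (forall l u, l \in L -> u \in U -> l <= u) ->
  exists s, (forall l, l \in L -> l <= s) /\ (forall u, u \in U -> s <= u).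
Proof.
elim: L => [|l L IH] H.
  have [s Hs] : exists s, forall u, u \in U -> s <= u.
    elim: U {H} => [|u U [s Hs]]; first by exists 0.
    exists (Num.min u s) => v; rewrite inE => /orP[/eqP->|/Hs Hv].
      by rewrite ge_min lexx.
    by rewrite ge_min Hv orbT.
  by exists s; split.
have [s [Hl Hu]] : exists s, (forall l, l \in L -> l <= s) /\ (forall u, u \in U -> s <= u).
  by apply: IH => l' u Hl' Hu'; apply: H => //; rewrite inE Hl' orbT.
exists (Num.max l s); split.
  move=> l'; rewrite inE => /orP[/eqP->|/Hl Hl'].
    by rewrite le_max lexx.
  by rewrite le_max Hl' orbT.
move=> u Hu'; rewrite ge_max Hu // andbT.
by apply: H => //; rewrite inE eqxx.
Qed.

Lemma fin_min (R : realDomainType) (T : eqType) (s : seq T) (Q : T -> R -> Prop) :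
  (forall x e e', 0 < e' -> e' <= e -> Q x e -> Q x e') ->
  (forall x, x \in s -> exists2 e, 0 < e & Q x e) ->
  exists2 e, 0 < e & forall x, x \in s -> Q x e.
Proof.
move=> Hmono; elim: s => [|a s IH] H; first by exists 1.
have [e1 He1 Q1] := H a (mem_head _ _).
have [e2 He2 Q2] : exists2 e, 0 < e & forall x, x \in s -> Q x e.
  by apply: IH => x Hx; apply: H; rewrite inE Hx orbT.
have Hm : 0 < Num.min e1 e2 by rewrite lt_min He1 He2.
exists (Num.min e1 e2) => // x; rewrite inE => /orP[/eqP->|Hx].
  by apply: (Hmono _ e1) => //; rewrite ge_min lexx.
by apply: (Hmono _ e2) => //; [rewrite ge_min lexx orbT | apply: Q2].
Qed.

Section FM.
Variables (R : realFieldType) (Z : Type) (C : eqType).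
Variable ev : C -> Z -> R.
Variable comb : R -> C -> R -> C -> C.
Variable good : C -> Prop.
Hypothesis evC : forall a c b d z, ev (comb a c b d) z = a * ev c z + b * ev d z.
Hypothesis goodC : forall a c b d, 0 <= a -> 0 <= b -> good c -> good d -> good (comb a c b d).
Variable m : nat.

Definition fval (k : nat) (c : C * 'cV[R]_m) (z : Z) (y : 'cV[R]_m) : R :=
  ev c.1 z + \sum_(j < m | (j < k)%N) c.2 j 0 * y j 0.

Lemma fvalS k c z y (Hk : (k < m)%N) :
  fval k.+1 c z y = fval k c z y + c.2 (Ordinal Hk) 0 * y (Ordinal Hk) 0.
Proof.
rewrite /fval -addrA; congr (_ + _).
rewrite (bigD1 (Ordinal Hk)) //= addrC; congr (_ + _).
apply: eq_bigl => j /=.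
by rewrite ltnS (ltn_neqAle j k) andbC.
Qed.

Lemma fvalSge k c z y (Hk : (m <= k)%N) : fval k.+1 c z y = fval k c z y.
Proof.
rewrite /fval; congr (_ + _); apply: eq_bigl => j.
by rewrite (leq_trans (ltn_ord j) Hk) (leq_trans (ltn_ord j) (leqW Hk)).
Qed.

Lemma fval_comb k a p b q z y :
  fval k (comb a p.1 b q.1, a *: p.2 + b *: q.2) z y
  = a * fval k p z y + b * fval k q z y.
Proof.
rewrite /fval /= evC.
have -> : \sum_(j < m | (j < k)%N) (a *: p.2 + b *: q.2) j 0 * y j 0 =
   a * \sum_(j < m | (j < k)%N) p.2 j 0 * y j 0 + b * \sum_(j < m | (j < k)%N) q.2 j 0 * y j 0.
  rewrite !mulr_sumr -big_split; apply: eq_bigr => j _; by rewrite !mxE mulrDl !mulrA.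
ring.
Qed.

Lemma fval_indep k c z (y y' : 'cV[R]_m) : (forall j : 'I_m, (j < k)%N -> y j 0 = y' j 0) ->
  fval k c z y = fval k c z y'.
Proof. by move=> H; rewrite /fval; congr (_ + _); apply: eq_bigr => j Hj; rewrite H. Qed.

Lemma FM k : forall S : seq (C * 'cV[R]_m), (forall c, c \in S -> good c.1) ->
  exists S' : seq C, (forall c, c \in S' -> good c) /\
   forall z, (exists y, forall c, c \in S -> 0 <= fval k c z y) <->
             (forall c, c \in S' -> 0 <= ev c z).
Proof.
elim: k => [|k IH] S HS.
  have E : forall c z y, fval 0 c z y = ev c.1 z.
    by move=> c z y; rewrite /fval big1 ?addr0.
  exists (map fst S); split.
    by move=> c /mapP [c' Hc' ->]; apply: HS.
  move=> z; split.
    by move=> [y Hy] c /mapP [c' Hc' ->]; have := Hy c' Hc'; rewrite E.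
  by move=> H; exists 0 => c Hc; rewrite E; apply: H; apply/mapP; exists c.
case: (leqP m k) => Hmk.
  have [S' [HS' HE]] := IH S HS; exists S'; split=> // z; rewrite -HE.
  by split => -[y Hy]; exists y => c Hc; [rewrite -(fvalSge _ _ _ _ Hmk) | rewrite (fvalSge _ _ _ _ Hmk)]; apply: Hy.
set kk := Ordinal Hmk.
pose ck (c : C * 'cV[R]_m) := c.2 kk 0.
pose Spos := [seq c <- S | 0 < ck c].
pose Sneg := [seq c <- S | ck c < 0].
pose S1 := [seq c <- S | ck c == 0] ++
   [seq (comb (- ck q) p.1 (ck p) q.1, (- ck q) *: p.2 + (ck p) *: q.2) | p <- Spos, q <- Sneg].
have HS1 : forall c, c \in S1 -> good c.1.
  move=> c; rewrite mem_cat => /orP[]; first by rewrite mem_filter => /andP[_]; apply: HS.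
  case/allpairsP => [[p q] [/= Hp Hq ->]] /=.
  move: Hp Hq; rewrite !mem_filter => /andP[Hp Hp'] /andP[Hq Hq'].
  by apply: goodC; [rewrite oppr_ge0 ltW | rewrite ltW | apply: HS | apply: HS].
have [S' [HS' HE]] := IH S1 HS1; exists S'; split => // z; rewrite -HE.
split.
  move=> [y Hy]; exists y => c; rewrite mem_cat => /orP[].
    rewrite mem_filter => /andP[/eqP H0 Hc]; have := Hy c Hc.
    by rewrite (fvalS _ _ _ _ Hmk) -/kk; rewrite /ck in H0; rewrite H0 mul0r addr0.
  case/allpairsP => [[p q] [/= Hp Hq ->]]; rewrite fval_comb.
  move: Hp Hq; rewrite !mem_filter => /andP[Hp Hp'] /andP[Hq Hq'].
  have := Hy p Hp'; have := Hy q Hq'; rewrite !(fvalS _ _ _ _ Hmk) -/kk.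
  rewrite /ck in Hp Hq *.
  set vp := fval k p z y; set vq := fval k q z y; set yk := y kk 0.
  set cp := p.2 kk 0; set cq := q.2 kk 0 => H1 H2.
  have -> : - cq * vp + cp * vq = (- cq) * (vp + cp * yk) + cp * (vq + cq * yk) by ring.
  by rewrite addr_ge0 // mulr_ge0 // ?oppr_ge0 ltW.
move=> [y Hy].
pose v c := fval k c z y.
have HLU : forall l u, l \in [seq - v c / ck c | c <- Spos] -> u \in [seq v c / (- ck c) | c <- Sneg] -> l <= u.
  move=> l u /mapP[p Hp ->] /mapP[q Hq ->].
  have Hpq : (comb (- ck q) p.1 (ck p) q.1, (- ck q) *: p.2 + (ck p) *: q.2) \in S1.
    by rewrite mem_cat; apply/orP; right; apply/allpairsP; exists (p, q).
  have := Hy _ Hpq; rewrite fval_comb -/(v p) -/(v q).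
  move: Hp Hq; rewrite !mem_filter => /andP[Hp _] /andP[Hq _].
  have Hq' : 0 < - ck q by rewrite oppr_gt0.
  move=> H.
  rewrite ler_pdivlMr // mulrAC ler_pdivrMr //.
  move: H; set a := ck p; set b := ck q; set x1 := v p; set x2 := v q => H.
  nra.
have [s [Hl Hu]] := @sep_exists R _ _ HLU.
exists (\col_j (if j == kk then s else y j 0)) => c Hc.
rewrite (fvalS _ _ _ _ Hmk) -/kk.
rewrite (@fval_indep _ _ _ _ y); last first.
  move=> j Hj; rewrite mxE; case: eqP => // Hjk; subst j.
  by rewrite /= ltnn in Hj.
rewrite mxE eqxx -/(v c).
have [Hneg|Hpos|H0] := ltrgtP (ck c) 0.
- have : s <= v c / (- ck c) by apply: Hu; apply/mapP; exists c => //; rewrite mem_filter Hneg.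
  rewrite ler_pdivlMr ?oppr_gt0 // -/(ck c).
  move: Hneg; set a := ck c; set x1 := v c => Ha H. nra.
- have : - v c / ck c <= s by apply: Hl; apply/mapP; exists c => //; rewrite mem_filter Hpos.
  rewrite ler_pdivrMr // -/(ck c).
  move: Hpos; set a := ck c; set x1 := v c => Ha H. nra.
- rewrite -/(ck c) H0 mul0r addr0; apply: Hy.
  by rewrite mem_cat mem_filter H0 eqxx Hc.
Qed.

End FM.

Section Inst.
Variables (R : realType) (p : nat).
Definition C3 := ('cV[R]_p * R * R)%type.
Definition evx (c : C3) (z : 'cV[R]_p * R) : R :=
  \sum_i c.1.1 i 0 * z.1 i 0 + c.1.2 * z.2 + c.2.
Definition combx (a : R) (c : C3) (b : R) (d : C3) : C3 :=
  (a *: c.1.1 + b *: d.1.1, a * c.1.2 + b * d.1.2, a * c.2 + b * d.2).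
Lemma evxC a c b d z : evx (combx a c b d) z = a * evx c z + b * evx d z.
Proof.
rewrite /evx /=.
have -> : \sum_i (a *: c.1.1 + b *: d.1.1) i 0 * z.1 i 0 =
  a * \sum_i c.1.1 i 0 * z.1 i 0 + b * \sum_i d.1.1 i 0 * z.1 i 0.
  by rewrite !mulr_sumr -big_split; apply: eq_bigr => j _; rewrite !mxE mulrDl !mulrA.
ring.
Qed.
Lemma goodxC a c b d : 0 <= a -> 0 <= b -> 0 <= c.1.2 -> 0 <= d.1.2 -> 0 <= (combx a c b d).1.2.
Proof. by move=> *; rewrite /= addr_ge0 // mulr_ge0. Qed.

Lemma evx_t c r t : evx c (r, t) = evx c (r, 0) + c.1.2 * t.
Proof. rewrite /evx /=; ring. Qed.

Lemma evx_near c (b : 'cV[R]_p) : exists2 K, 0 < K & forall (r : 'cV[R]_p) (t d : R), 0 <= d ->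
  (forall i, `|(r : 'cV[R]_p) i 0 - b i 0| < d) -> `|evx c (r, t) - evx c (b, t)| <= K * d.
Proof.
exists (1 + \sum_i `|c.1.1 i 0|).
  by apply: (lt_le_trans ltr01); rewrite lerDl sumr_ge0 // => i _; rewrite normr_ge0.
move=> r t d Hd Hr.
have -> : evx c (r, t) - evx c (b, t) = \sum_i c.1.1 i 0 * (r i 0 - b i 0).
  symmetry; rewrite (eq_bigr (fun i => c.1.1 i 0 * r i 0 - c.1.1 i 0 * b i 0)) ?sumrB /evx /=;
    last by move=> i _; rewrite mulrBr.
  ring.
apply: (le_trans (ler_norm_sum _ _ _)).
apply: (@le_trans _ _ (\sum_i `|c.1.1 i 0| * d)).
  apply: ler_sum => i _; rewrite normrM ler_wpM2l // ltW //.
rewrite -mulr_suml ler_wpM2r // lerDr //.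
Qed.
End Inst.
Arguments evx {R p}.
Arguments combx {R p}.
Arguments evx_t {R p}.
Arguments evx_near {R p}.

Lemma sum_delta (R : realType) p (i : 'I_p) (r : 'cV[R]_p) :
  \sum_j (- delta_mx i 0 : 'cV[R]_p) j 0 * r j 0 = - r i 0.
Proof.
rewrite (bigD1 i) //= big1 ?addr0 => [|j /negbTE Hj]; rewrite !mxE ?eqxx ?Hj /=.
  by rewrite mulN1r.
by rewrite oppr0 mul0r.
Qed.

Lemma polyP (R : realType) p n m (A : 'M[R]_(p, n)) (G : 'M[R]_(p, m))
  (cx : 'cV[R]_n) (cy : 'cV[R]_m) (x : 'cV[R]_n) : binary_vec x ->
  exists S : seq (C3 R p), (forall c, c \in S -> 0 <= c.1.2) /\
  forall r t, (exists y, mblp_feasible A G r x y /\ mblp_obj cx cy x y <= t) <->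
     (forall c, c \in S -> 0 <= evx c (r, t)).
Proof.
move=> Hx.
pose S0 : seq (C3 R p * 'cV[R]_m) :=
  [seq ((- delta_mx i 0, 0, (A *m x) i 0), (row i G)^T) | i <- enum 'I_p] ++
  [:: ((0, 1, - (cx^T *m x) 0 0), - cy)].
have HS0 : forall c, c \in S0 -> 0 <= c.1.1.2.
  by move=> c; rewrite mem_cat => /orP[/mapP[i _ ->]|]; rewrite ?inE ?ler01 //= => /eqP-> /=; rewrite ler01.
have [S [HSg HE]] := @FM R _ _ (@evx R p) (@combx R p) (fun c => 0 <= c.1.2)
   (@evxC R p) (@goodxC R p) m m S0 HS0.
exists S; split => // r t; rewrite -HE.
have Hval : forall c y, @fval R _ _ evx m m c (r, t) y = evx c.1 (r, t) + (c.2^T *m y) 0 0.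
  move=> c y; rewrite /fval mxE; congr (_ + _).
  by apply: eq_big => // j; [rewrite ltn_ord | move=> _; rewrite mxE].
have Hi : forall i, ((- delta_mx i 0, 0, (A *m x) i 0), (row i G)^T) \in S0.
  by move=> i; rewrite mem_cat; apply/orP; left; apply/mapP; exists i; rewrite ?mem_enum.
have Ho : ((0, 1, - (cx^T *m x) 0 0), - cy) \in S0.
  by rewrite mem_cat inE eqxx orbT.
have Ei : forall i y, @fval R _ _ evx m m ((- delta_mx i 0, 0, (A *m x) i 0), (row i G)^T) (r, t) y
   = (A *m x + G *m y) i 0 - r i 0.
  move=> i y; rewrite Hval /evx /= sum_delta trmxK -row_mul !mxE; ring.
have Eo : forall y, @fval R _ _ evx m m ((0, 1, - (cx^T *m x) 0 0), - cy) (r, t) y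
   = t - mblp_obj cx cy x y.
  move=> y; rewrite Hval /evx /mblp_obj /= big1 => [|j _]; last by rewrite mxE mul0r.
  rewrite linearN /= mulNmx !mxE; ring.
split.
  move=> [y [[_ Hf] Hob]]; exists y => c; rewrite mem_cat => /orP[/mapP[i _ ->]|].
    by rewrite Ei subr_ge0.
  by rewrite inE => /eqP->; rewrite Eo subr_ge0.
move=> [y Hy]; exists y; split; [split => // i|].
  by have := Hy _ (Hi i); rewrite Ei subr_ge0.
by have := Hy _ Ho; rewrite Eo subr_ge0.
Qed.
Arguments polyP {R p n m}.

Definition sat (R : realType) p (S : seq (C3 R p)) (r : 'cV[R]_p) (t : R) :=
  forall c, c \in S -> 0 <= evx c (r, t).
Arguments sat {R p}.

Lemma not_sat (R : realType) p (S : seq (C3 R p)) r t :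
  ~ sat S r t -> exists2 c, c \in S & evx c (r, t) < 0.
Proof.
move=> H.
have /allPn [c Hc Hlt] : ~~ all (fun c => 0 <= evx c (r, t)) S.
  by apply/negP => /allP H'; apply: H => c Hc; apply: H'.
by exists c => //; rewrite ltNge.
Qed.

Arguments not_sat {R p S r t}.

Lemma shape (R : realType) p (S : seq (C3 R p)) r :
  (forall c, c \in S -> 0 <= c.1.2) ->
  (forall t, sat S r t) \/ (forall t, ~ sat S r t) \/
  exists t0, forall t, sat S r t <-> t0 <= t.
Proof.
elim: S => [|c S IH] HS.
  by left => t c; rewrite in_nil.
have HsatC : forall t, sat (c :: S) r t <-> 0 <= evx c (r, t) /\ sat S r t.
  move=> t; split => [H|[H1 H2] c'].
    split; first by apply: H; rewrite mem_head.
    by move=> c' Hc'; apply: H; rewrite inE Hc' orbT.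
  by rewrite inE => /orP[/eqP->|] //; apply: H2.
have IH' : forall c', c' \in S -> 0 <= c'.1.2.
  by move=> c' Hc'; apply: HS; rewrite inE Hc' orbT.
have := IH IH'.
have Hb : 0 <= c.1.2 by apply: HS; rewrite mem_head.
have Ht := evx_t c r.
move: Hb Ht; set e0 := evx c (r, 0); set b := c.1.2 => Hb Ht.
have [Hb0|Hbn] := eqVneq b 0.
  have [He|He] := leP 0 e0.
    have E : forall t, sat (c :: S) r t <-> sat S r t.
      move=> t; split => [/HsatC[]//|H]; apply/HsatC; split => //.
      by rewrite Ht Hb0 mul0r addr0.
    case=> [Hall|[Hnone|[t0 Ht0]]].
    - by left => t; apply/E.
    - by right; left => t /E; apply: Hnone.
    - by right; right; exists t0 => t; split => [/E/Ht0 //|/Ht0/E].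
  move=> _; right; left => t /HsatC [H _].
  by move: H; rewrite Ht Hb0 mul0r addr0 leNgt He.
have Hbp : 0 < b by rewrite lt_neqAle eq_sym Hbn Hb.
have Hth : forall t, 0 <= evx c (r, t) <-> - e0 / b <= t.
  move=> t; rewrite Ht ler_pdivrMr // (mulrC t); split => H; lra.
case=> [Hall|[Hnone|[t0 Ht0]]].
- right; right; exists (- e0 / b) => t; split.
    by move/HsatC => [/Hth].
  by move=> H; apply/HsatC; split; [apply/Hth | apply: Hall].
- by right; left => t /HsatC [_ H]; apply: Hnone H.
- right; right; exists (Num.max (- e0 / b) t0) => t; rewrite ge_max; split.
    by move/HsatC => [/Hth -> /Ht0 ->].
  by case/andP => H1 H2; apply/HsatC; split; [apply/Hth | apply/Ht0].
Qed.
Arguments shape {R p}.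

Theorem proposition1 (R : realType) (p n m : nat)
  (A : 'M[R]_(p, n)) (G : 'M[R]_(p, m)) (cx : 'cV[R]_n) (cy : 'cV[R]_m)
  (b : 'cV[R]_p) (xs : 'cV[R]_n) (ys : 'cV[R]_m) :
  mblp_optimal A G cx cy b xs ys ->
  (forall x y, mblp_optimal A G cx cy b x y -> x = xs) ->
  (exists2 eps : R, 0 < eps &
     forall bhat, in_ball b eps bhat -> exists y, mblp_feasible A G bhat xs y) ->
  exists2 eps : R, 0 < eps &
    forall bhat, in_ball b eps bhat ->
      (exists y, mblp_optimal A G cx cy bhat xs y) /\
      (forall x y, mblp_optimal A G cx cy bhat x y -> x = xs).
Proof.
move=> [[Hbin Hfeas] Hopt] Huniq [eps1 eps1_gt0 Hneigh].
set vs := mblp_obj cx cy xs ys.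
pose P x r t := exists y, mblp_feasible A G r x y /\ mblp_obj cx cy x y <= t.
have Hlow : forall x, binary_vec x -> x != xs -> exists2 e, 0 < e &
   forall r t, in_ball b e r -> t <= vs + e -> ~ P x r t.
  move=> x Hx Hne.
  have [S [HSg HSP]] := polyP A G cx cy x Hx.
  have [t1 Ht1v Ht1] : exists2 t1, vs < t1 & ~ sat S b t1.
    have [Hall|[Hnone|[t0 Ht0]]] := shape S b HSg.
    - exfalso.
      have [y [Hf Hle]] := (HSP b (vs - 1)).2 (Hall (vs - 1)).
      have := Hopt x y Hf; rewrite -/vs => H; lra.
    - by exists (vs + 1); [lra | apply: Hnone].
    - have Hvt : vs < t0.
        rewrite ltNge; apply/negP => Hle.
        have [y [Hf Hle']] := (HSP b t0).2 ((Ht0 t0).2 (lexx _)).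
        have Hoptx : mblp_optimal A G cx cy b x y.
          split => // x' y' Hf'; apply: le_trans (Hopt x' y' Hf').
          exact: le_trans Hle' Hle.
        by move: Hne; rewrite (Huniq x y Hoptx) eqxx.
      exists ((vs + t0) / 2); first lra.
      move/Ht0 => H; lra.
  have [c Hc Hneg] := not_sat Ht1.
  have [K HK HKn] := evx_near c b.
  set d := - evx c (b, t1).
  have Hd : 0 < d by rewrite oppr_gt0.
  have HKd : 0 < d / (2 * K) by rewrite divr_gt0 // mulr_gt0.
  exists (Num.min (t1 - vs) (d / (2 * K))).
    by rewrite lt_min subr_gt0 Ht1v HKd.
  move=> r t Hr Ht [y [Hf Hle]].
  have Hsat : sat S r t by apply: (HSP r t).1; exists y.
  have H1 := Hsat c Hc.
  have Hmin1 : Num.min (t1 - vs) (d / (2 * K)) <= t1 - vs by rewrite ge_min lexx.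
  have Hmin2 : Num.min (t1 - vs) (d / (2 * K)) <= d / (2 * K) by rewrite ge_min lexx orbT.
  have Htt1 : t <= t1 by lra.
  have Hmono : evx c (r, t) <= evx c (r, t1).
    by rewrite (evx_t c r t) (evx_t c r t1) lerD2l ler_wpM2l // HSg.
  have Hnear := HKn r t1 (d / (2 * K)) (ltW HKd) (fun i => lt_le_trans (Hr i) Hmin2).
  rewrite ler_norml in Hnear; case/andP: Hnear => _ Hn2.
  have HK2 : K * (d / (2 * K)) = d / 2.
    by field; rewrite ?gt_eqF.
  rewrite HK2 in Hn2; move: Hn2 Hd; rewrite /d => Hn2 Hd'.
  lra.
pose bin (f : {ffun 'I_n -> bool}) : 'cV[R]_n := \col_i ((f i)%:R).
pose Xs := [seq bin f | f <- enum {ffun 'I_n -> bool}].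
have HmonoL : forall x e e', 0 < e' -> e' <= e ->
   (binary_vec x -> x != xs -> forall r t, in_ball b e r -> t <= vs + e -> ~ P x r t) ->
   (binary_vec x -> x != xs -> forall r t, in_ball b e' r -> t <= vs + e' -> ~ P x r t).
  move=> x e e' He' Hle H Hx Hne r t Hr Ht; apply: (H Hx Hne r t).
    2: lra.
  by move=> i; apply: lt_le_trans (Hr i) Hle.
have HXs : forall x, x \in Xs -> exists2 e, 0 < e &
   (binary_vec x -> x != xs -> forall r t, in_ball b e r -> t <= vs + e -> ~ P x r t).
  move=> x /mapP[f _ ->].
  have Hb : binary_vec (bin f) by move=> i; rewrite mxE; case: (f i); [right|left].
  have [Heq|Hne] := eqVneq (bin f) xs.
    by exists 1 => // _; rewrite Heq eqxx.
  have [e He H] := Hlow _ Hb Hne; by exists e.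
have [eL eL_gt0 HL] := @fin_min R _ Xs _ HmonoL HXs.
have HL' : forall x, binary_vec x -> x != xs -> forall r t, in_ball b eL r -> t <= vs + eL -> ~ P x r t.
  move=> x Hx.
  have HxX : x \in Xs.
    apply/mapP; exists [ffun i => x i 0 == 1]; first by rewrite mem_enum.
    apply/matrixP => i j; rewrite !mxE ffunE (ord1 j).
    by case: (Hx i) => ->; rewrite ?eqxx // eq_sym oner_eq0.
  exact: (HL x HxX Hx).
have [S [HSg HSP]] := polyP A G cx cy xs Hbin.
have HSb : sat S b vs by apply: (HSP b vs).1; exists ys; split.
have HmonoU : forall c e e', 0 < e' -> e' <= e ->
   (forall r, in_ball b e r -> 0 <= evx c (r, vs + eL)) ->
   (forall r, in_ball b e' r -> 0 <= evx c (r, vs + eL)).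
  by move=> c e e' He' Hle H r Hr; apply: H => i; apply: lt_le_trans (Hr i) Hle.
have HSU : forall c, c \in S -> exists2 d, 0 < d &
   (forall r, in_ball b d r -> 0 <= evx c (r, vs + eL)).
  move=> c Hc; have Hb := HSg c Hc.
  have [Hb0|Hbn] := eqVneq c.1.2 0.
    exists eps1 => // r Hr; have [y Hy] := Hneigh r Hr.
    have := (HSP r (mblp_obj cx cy xs y)).1 (ex_intro _ y (conj Hy (lexx _))) c Hc.
    by rewrite (evx_t c r (mblp_obj cx cy xs y)) (evx_t c r (vs + eL)) Hb0 !mul0r.
  have Hpos : 0 < c.1.2 by rewrite lt_neqAle eq_sym Hbn Hb.
  set d0 := evx c (b, vs + eL).
  have Hd0 : 0 < d0.
    rewrite /d0 evx_t; have := HSb c Hc; rewrite evx_t mulrDr => H.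
    have : 0 < c.1.2 * eL by rewrite mulr_gt0.
    lra.
  have [K HK HKn] := evx_near c b.
  exists (d0 / K); first by rewrite divr_gt0.
  move=> r Hr; have := HKn r (vs + eL) (d0 / K) (ltW (divr_gt0 Hd0 HK)) Hr.
  rewrite ler_norml => /andP[H _].
  rewrite [K * _]mulrC divfK ?gt_eqF // in H.
  move: H; rewrite -/d0 => H; lra.
have [dU dU_gt0 HU] := @fin_min R _ S _ HmonoU HSU.
have [c0 Hc0 Hc0pos] : exists2 c, c \in S & 0 < c.1.2.
  have [Hh|Hn] := boolP (has (fun c => 0 < c.1.2) S).
    by case/hasP: Hh => c Hc H; exists c.
  exfalso; move/hasPn: Hn => H.
  have : False.
    have Hs : sat S b (vs - 1).
      move=> c Hc; have := HSb c Hc; have := H c Hc.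
      rewrite lt_neqAle HSg // andbT negbK => /eqP H0.
      by rewrite (evx_t c b vs) (evx_t c b (vs - 1)) -H0 !mul0r.
    have [y [Hf Hle]] := (HSP b (vs - 1)).2 Hs.
    have := Hopt xs y Hf; rewrite -/vs => H'; lra.
  by [].
exists (Num.min eL dU); first by rewrite lt_min eL_gt0 dU_gt0.
move=> bh Hbh.
have HbhL : in_ball b eL bh.
  by move=> i; apply: lt_le_trans (Hbh i) _; rewrite ge_min lexx.
have HbhU : in_ball b dU bh.
  by move=> i; apply: lt_le_trans (Hbh i) _; rewrite ge_min lexx orbT.
have Hsat : sat S bh (vs + eL) by move=> c Hc; apply: HU.
have [Hall|[Hnone|[t0 Ht0]]] := shape S bh HSg.
- exfalso.
  have := Hall (- (evx c0 (bh, 0) + 1) / c0.1.2) c0 Hc0.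
  rewrite evx_t [c0.1.2 * _]mulrC divfK ?gt_eqF // => H; lra.
- by exfalso; apply: Hnone Hsat.
have [y0 [Hf0 Hob0]] := (HSP bh t0).2 ((Ht0 t0).2 (lexx _)).
have Ht0le : t0 <= vs + eL := (Ht0 _).1 Hsat.
have Hkey : forall x y, mblp_feasible A G bh x y -> x != xs -> t0 < mblp_obj cx cy x y.
  move=> x y Hf Hne; rewrite ltNge; apply/negP => Hle.
  have HP : P x bh (mblp_obj cx cy x y) by exists y; split; [exact: Hf | exact: lexx].
  exact: (HL' x Hf.1 Hne bh (mblp_obj cx cy x y) HbhL (le_trans Hle Ht0le) HP).
have Hxs : forall y, mblp_feasible A G bh xs y -> t0 <= mblp_obj cx cy xs y.
  move=> y Hf; apply: ((Ht0 _).1); apply: ((HSP bh _).1).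
  exists y; split; [exact: Hf | exact: lexx].
split.
  exists y0; split; first exact: Hf0.
  move=> x' y' Hf'.
  have [Heq|Hne] := eqVneq x' xs.
    rewrite Heq; rewrite Heq in Hf'; exact: le_trans Hob0 (Hxs _ Hf').
  exact: le_trans Hob0 (ltW (Hkey _ _ Hf' Hne)).
move=> x y [Hf Hopt']; have [Heq|Hne] := eqVneq x xs; first exact: Heq.
exfalso.
have H1 := Hopt' xs y0 Hf0; have H2 := Hkey x y Hf Hne.
move: H1 H2 Hob0.
set u := mblp_obj cx cy x y; set w := mblp_obj cx cy xs y0 => H1 H2 H3.
have := lt_le_trans H2 (le_trans H1 H3); by rewrite ltxx.
Qed.
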